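(* For $n \geq 1$ let $P_n(x) = (x^2-x-1)x^n + 1$ and let $C_n$ be the convex hull of the set of roots $q'$ of $P_n$ with $|q'|<1$. Then for every $\varepsilon > 0$ there exists $N$ such that for all $n > N$, \[ \{z \in \mathbb{C} : |z| \leq 1-\varepsilon\} \subset C_n \subset \{z \in \mathbb{C}: |z| \leq 1\}. \] *)

(* Defs.v *)
From HB Require Import structures.
From mathcomp Require Import all_boot all_order all_algebra.
From mathcomp Require Import complex.
From mathcomp Require Import reals.
Set Implicit Arguments. Unset Strict Implicit. Unset Printing Implicit Defensive.
Import Order.TTheory GRing.Theory Num.Theory.
Local Open Scope ring_scope.
Local Open Scope complex_scope.

Definition Pn (R : realType) (n : nat) : {poly R[i]} :=
  ('X^2 - 'X - 1) * 'X^n + 1.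

Definition small_roots (R : realType) (n : nat) (q : R[i]) : Prop :=
  root (Pn R n) q /\ `|q| < 1.

Definition convex_hull (R : realType) (S : R[i] -> Prop) (z : R[i]) : Prop :=
  exists (k : nat) (q : 'I_k -> R[i]) (w : 'I_k -> R),
    (forall i, S (q i)) /\ (forall i, 0 <= w i) /\ \sum_(i < k) w i = 1 /\
    z = \sum_(i < k) (w i)%:C * q i.

Definition Cn (R : realType) (n : nat) : R[i] -> Prop :=
  convex_hull (@small_roots R n).

Definition cdisk (R : realType) (r : R) (z : R[i]) : Prop := `|z| <= r%:C.

(* Main.v *)
Require Import Defs.
From HB Require Import structures.
From mathcomp Require Import all_boot all_order all_algebra.
From mathcomp Require Import complex.
From mathcomp Require Import reals.
From mathcomp Require Import ring lra.
From mathcomp Require Import boolp classical_sets topology normedtype sequences derive realfun exp trigo.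
Import numFieldNormedType.Exports.
Local Open Scope classical_set_scope.
Local Open Scope ring_scope.
Import Order.TTheory GRing.Theory Num.Theory.
Local Open Scope ring_scope.
Local Notation "x +i* y" := (Complex x y) : ring_scope.
Local Notation "x %:C" := (real_complex _ x) : ring_scope.
Local Notation "x ^*" := (conjc x) : ring_scope.

Section NM.
Variable R : realType.
Implicit Types x y z : R[i].

Definition nm z : R := Num.sqrt (complex.Re z ^+ 2 + complex.Im z ^+ 2).

Lemma nm_norm z : `|z| = (nm z)%:C.
Proof. exact: normc_def. Qed.

Lemma nm_ge0 z : 0 <= nm z.
Proof. exact: sqrtr_ge0. Qed.

Lemma nm_sqr z : nm z ^+ 2 = complex.Re z ^+ 2 + complex.Im z ^+ 2.
Proof. by rewrite sqr_sqrtr // addr_ge0 // sqr_ge0. Qed.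

Lemma nmD x y : nm (x + y) <= nm x + nm y.
Proof. by rewrite -lecR rmorphD /= -!nm_norm ler_normD. Qed.

Lemma nmM x y : nm (x * y) = nm x * nm y.
Proof. by apply: complexI; rewrite rmorphM /= -!nm_norm normrM. Qed.

Lemma nmN x : nm (- x) = nm x.
Proof. by apply: complexI; rewrite -!nm_norm normrN. Qed.

Lemma nmB x y : nm (x - y) = nm (y - x).
Proof. by rewrite -nmN opprB. Qed.

Lemma nmX x n : nm (x ^+ n) = nm x ^+ n.
Proof. by apply: complexI; rewrite rmorphXn /= -!nm_norm normrX. Qed.

Lemma nmR (r : R) : nm (r%:C) = `|r|.
Proof. by rewrite /nm /= expr0n /= addr0 sqrtr_sqr. Qed.

Lemma nm1 : nm 1 = 1.
Proof. by rewrite -[1]/(1%:C) nmR normr1. Qed.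

Lemma nm_eq0 z : (nm z == 0) = (z == 0).
Proof. by rewrite -(inj_eq (@complexI R)) -nm_norm normr_eq0. Qed.

Lemma nmV x : nm (x^-1) = (nm x)^-1.
Proof. by apply: complexI; rewrite fmorphV /= -!nm_norm normfV. Qed.

Lemma Re_le x : `|complex.Re x| <= nm x.
Proof.
rewrite -(ler_pXn2r (n := 2)) ?nm_ge0 ?normr_ge0 //= ?nnegrE ?nm_ge0 ?normr_ge0 //.
by rewrite nm_sqr real_normK ?num_real // lerDl sqr_ge0.
Qed.

Lemma Im_le x : `|complex.Im x| <= nm x.
Proof.
rewrite -(ler_pXn2r (n := 2)) ?nnegrE ?nm_ge0 ?normr_ge0 //.
by rewrite nm_sqr real_normK ?num_real // lerDr sqr_ge0.
Qed.

Lemma nm_le x : nm x <= `|complex.Re x| + `|complex.Im x|.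
Proof.
rewrite -(ler_pXn2r (n := 2)) ?nnegrE ?nm_ge0 ?addr_ge0 ?normr_ge0 //.
rewrite nm_sqr sqrrD !real_normK ?num_real //.
have := normr_ge0 (complex.Re x); have := normr_ge0 (complex.Im x); nra.
Qed.

Lemma nm_conj x : nm (x^*) = nm x.
Proof. by case: x => a b; rewrite /nm /= sqrrN. Qed.


Definition e (t : R) : R[i] := (cos t) +i* (sin t).

Lemma e_add s t : e (s + t) = e s * e t.
Proof. by rewrite /e sinD cosD; simpc; congr (_ +i* _); ring. Qed.

Lemma e0 : e 0 = 1.
Proof. by rewrite /e cos0 sin0. Qed.

Lemma e_nat t n : e t ^+ n = e (n%:R * t).
Proof.
elim: n => [|n IH]; first by rewrite expr0 mul0r e0.
by rewrite exprS IH -e_add mulrSr mulrDl mul1r addrC.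
Qed.

Lemma e_per t k : e (t + (pi *+ 2) *+ k) = e t.
Proof. by rewrite /e (periodicn (@cosD2pi R)) (periodicn (@sinD2pi R)). Qed.

Lemma nm_e t : nm (e t) = 1.
Proof. by rewrite /nm /= cos2Dsin2 sqrtr1. Qed.

Lemma sin_le (t : R) : 0 <= t -> `|sin t| <= t.
Proof.
move=> t0.
have Hc : {within `[(0:R), t], continuous (@sin R)}.
  by apply/continuous_subspaceT => ?; exact: continuous_sin.
have [c _ H] := @MVT_segment R sin cos (0:R) t t0 (fun u _ => is_derive_sin u) Hc.
rewrite sin0 subr0 subr0 in H.
by rewrite H normrM (ger0_norm t0) ler_piMl // cos_max.
Qed.

Lemma e_sub1 (t : R) : 0 <= t -> nm (e t - 1) <= 2 * t.
Proof.
move=> t0; apply: le_trans (nm_le _) _.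
rewrite /e /=.
have -> : cos t = 1 - 2 * sin (t / 2) ^+ 2.
  have E : t / 2 + t / 2 = t by field.
  rewrite -{1}E cosD; have := cos2Dsin2 (t/2); lra.
have h1 := sin_le (t / 2) (divr_ge0 t0 (ler0n _ 2)).
have h2 := sin_max (t / 2).
have h3 : sin (t/2) ^+ 2 <= `|sin (t/2)|.
  by rewrite -real_normK ?num_real // expr2 ler_piMl ?normr_ge0.
rewrite oppr0 addr0.
have -> : 1 - 2 * sin (t / 2) ^+ 2 - 1 = - (2 * sin (t / 2) ^+ 2) by ring.
rewrite normrN ger0_norm; last by rewrite mulr_ge0 // sqr_ge0.
have h4 := sin_le t t0.
lra.
Qed.


Lemma nm_sum (I : Type) (s : seq I) (f : I -> R[i]) :
  nm (\sum_(r <- s) f r) <= \sum_(r <- s) nm (f r).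
Proof.
elim: s => [|r s IH]; first by rewrite !big_nil -[0]/(0%:C) nmR normr0.
by rewrite !big_cons; apply: le_trans (nmD _ _) _; apply: lerD.
Qed.

Lemma sum_const_seq (T : Type) (s : seq T) (c : R) :
  \sum_(r <- s) c = (size s)%:R * c.
Proof.
elim: s => [|r s IH]; first by rewrite big_nil mul0r.
by rewrite big_cons IH /= mulrSr mulrDl mul1r addrC.
Qed.

Lemma deriv_prod_eval (rs : seq R[i]) z : all (fun r => r != z) rs ->
  (\prod_(r <- rs) ('X - r%:P))^`().[z] =
  (\prod_(r <- rs) ('X - r%:P)).[z] * \sum_(r <- rs) (z - r)^-1.
Proof.
elim: rs => [|r rs IH] /=.
  by rewrite !big_nil -[1]/(1%:P : {poly R[i]}) derivC horner0 mulr0.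
case/andP=> rz /IH {}IH.
rewrite !big_cons derivM derivXsubC mul1r hornerD !hornerM IH hornerXsubC.
have : z - r != 0 by rewrite subr_eq0 eq_sym.
move=> H; field.
by [].
Qed.

Lemma newton (p : {poly R[i]}) z : p^`().[z] != 0 ->
  exists2 r, root p r & nm (z - r) * nm (p^`().[z]) <= ((size p).-1)%:R * nm (p.[z]).
Proof.
move=> d0.
case: (eqVneq p.[z] 0) => [pz0|pz0].
  exists z; first exact/rootP.
  by rewrite subrr -[0]/(0%:C) nmR normr0 mul0r mulr_ge0 ?ler0n ?nm_ge0.
have [rs Hp] := closed_field_poly_normal p.
set P := \prod_(r <- rs) ('X - r%:P) in Hp.
have c0 : lead_coef p != 0.
  apply: contra d0 => /eqP c0; rewrite Hp c0 scale0r.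
  by rewrite -[0]/(0%:P : {poly R[i]}) derivC horner0.
have nz : all (fun r => r != z) rs.
  apply/allP => r rin; apply: contra pz0 => /eqP <-.
  rewrite Hp hornerZ -/P; apply/eqP; rewrite (rootP _) ?mulr0 //.
  by rewrite root_prod_XsubC.
have Hd : p^`().[z] = p.[z] * \sum_(r <- rs) (z - r)^-1.
  by rewrite {1}Hp derivZ hornerZ deriv_prod_eval // mulrA -hornerZ -Hp.
have sz : size p = (size rs).+1.
  by rewrite Hp size_scale // size_prod_XsubC.
rewrite sz /=.
set m := size rs.
case: (boolP (has (fun r => nm (z - r) * nm p^`().[z] <= m%:R * nm p.[z]) rs)).
  case/hasP => r rin H; exists r => //.
  by rewrite Hp /root hornerZ (rootP _) ?mulr0 // root_prod_XsubC.
move/hasPn => H; exfalso.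
have rsn : rs != [::].
  by apply: contra d0 => /eqP E; rewrite Hd E big_nil mulr0.
have npz : 0 < nm p.[z] by rewrite lt_def nm_ge0 nm_eq0 pz0.
have npd : 0 < nm p^`().[z] by rewrite lt_def nm_ge0 nm_eq0 d0.
have mpos : 0 < m%:R * nm p.[z].
  by rewrite mulr_gt0 // ltr0n lt0n size_eq0.
have key : forall r, r \in rs -> nm ((z - r)^-1) < nm p^`().[z] / (m%:R * nm p.[z]).
  move=> r rin; have := H r rin; rewrite -ltNge nmV => Hr.
  have zr : 0 < nm (z - r).
    rewrite lt_def nm_ge0 nm_eq0 subr_eq0 andbT; apply/eqP => E.
    by move/allP: nz => /(_ r rin); rewrite E eqxx.
  by rewrite ltr_pdivlMr // ltr_pdivrMl.
have S2 : \sum_(r <- rs) nm ((z - r)^-1) < \sum_(r <- rs) (nm p^`().[z] / (m%:R * nm p.[z])).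
  rewrite big_seq [X in _ < X]big_seq; apply: ltr_sum => //.
  by case: rs rsn {H nz Hd sz m mpos key P Hp} => // r rs _ /=; rewrite mem_head.
rewrite sum_const_seq -/m in S2.
have S1 := nm_sum _ rs (fun r => (z - r)^-1).
have : nm p^`().[z] < nm p^`().[z].
  rewrite {1}Hd nmM.
  apply: (le_lt_trans (ler_wpM2l (nm_ge0 _) S1)).
  apply: (@lt_le_trans _ _ (nm p.[z] * (m%:R * (nm p^`().[z] / (m%:R * nm p.[z]))))).
    by rewrite ltr_pM2l.
  have mn0 : m%:R != 0 :> R by rewrite pnatr_eq0 size_eq0.
  have pn0 : nm p.[z] != 0 by rewrite gt_eqF.
  rewrite le_eqVlt; apply/orP; left; apply/eqP; field.
  by rewrite mn0 pn0.
by rewrite ltxx.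
Qed.


Lemma Pn_eval n x : (Pn R n).[x] = (x ^+ 2 - x - 1) * x ^+ n + 1.
Proof. by rewrite /Pn !hornerE. Qed.

Lemma Pn_deriv_eval n x : (Pn R n)^`().[x] =
  (2 * x - 1) * x ^+ n + (x ^+ 2 - x - 1) * (x ^+ n.-1 *+ n).
Proof.
rewrite /Pn derivD derivM !derivB !derivXn derivX -[1]/(1%:P : {poly R[i]}) derivC.
rewrite !hornerE /=.
have -> : (('X^(n.-1) *+ n : {poly R[i]}).[x] = x ^+ n.-1 *+ n) by rewrite hornerMn hornerXn.
ring.
Qed.

Lemma size_Pn n : ((size (Pn R n)).-1 <= n + 2)%N.
Proof.
rewrite /Pn.
have h1 : (size (('X^2 - 'X - 1)%R : {poly R[i]}) <= 3)%N.
  apply: leq_trans (size_polyD _ _) _; rewrite geq_max size_polyN size_poly1 andbT.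
  apply: leq_trans (size_polyD _ _) _; rewrite geq_max size_polyN size_polyX size_polyXn.
  by [].
have h2 := size_polyMleq (('X^2 - 'X - 1)%R : {poly R[i]}) 'X^n.
rewrite size_polyXn in h2.
have h3 := size_polyD ((('X^2 - 'X - 1) * 'X^n)%R : {poly R[i]}) 1.
rewrite size_poly1 in h3.
have : (size ((('X^2 - 'X - 1) * 'X^n + 1)%R : {poly R[i]}) <= n + 3)%N.
  apply: leq_trans h3 _; rewrite geq_max; apply/andP; split; last by rewrite addn3.
  apply: leq_trans h2 _; rewrite addnS /=.
  by rewrite addnC leq_add2l.
by case: size => //= k; rewrite addnS ltnS => /leq_trans; apply; rewrite addnS.
Qed.

Lemma root_conj n q : root (Pn R n) q -> root (Pn R n) (q^*).
Proof.
rewrite /root !Pn_eval => /eqP H; apply/eqP.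
have := congr1 conjc H; rewrite conjc0 => <-.
by rewrite rmorphD rmorphM !rmorphB rmorphXn rmorph1 rmorphXn.
Qed.


Lemma sin_atan (x : R) : sin (atan x) = x * (Num.sqrt (1 + x ^+ 2))^-1.
Proof.
have c0 : cos (atan x) != 0.
  by apply/lt0r_neq0/cos_gt0_pihalf; rewrite atan_gtNpi2 atan_ltpi2.
rewrite -cos_atan -{2}[x]atanK /tan divfK //.
Qed.

Lemma eN_mul t : e (- t) * e t = 1.
Proof. by rewrite -e_add addNr e0. Qed.

Lemma nm_sub (x y : R[i]) : nm x - nm y <= nm (x - y).
Proof.
have := nmD (x - y) y; rewrite subrK; lra.
Qed.

Section Core.
Variable th : R.
Hypothesis th0 : 0 < th.
Hypothesis thpi : th < pi.

Let s := sin th.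
Let w := e th.
Let A := w ^+ 2 - w - 1.
Let g := Num.sqrt (1 + 4 * s ^+ 2).
Let a := (g^-1)%:C * e (atan (2 * s) - th).

Lemma s_gt0 : 0 < s.
Proof. by apply: sin_gt0_pi; rewrite th0 thpi. Qed.

Lemma g_sqr : g ^+ 2 = 1 + 4 * s ^+ 2.
Proof. by rewrite /g sqr_sqrtr // addr_ge0 // mulr_ge0 // sqr_ge0. Qed.

Lemma g_gt1 : 1 < g.
Proof.
have := g_sqr; have := s_gt0; have : 0 <= g by exact: sqrtr_ge0.
nra.
Qed.

Lemma AeN : A * e (- th) = (-1) +i* (2 * s).
Proof.
rewrite /A /w /e cosN sinN /s; simpc.
have := cos2Dsin2 th.
move=> H; congr (_ +i* _).
  transitivity (-1 + (cos th - 1) * (cos th ^+ 2 + sin th ^+ 2 - 1)); first by ring.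
  by rewrite H subrr mulr0 addr0.
transitivity (2 * sin th + sin th * (cos th ^+ 2 + sin th ^+ 2 - 1)); first by ring.
by rewrite H subrr mulr0 addr0.
Qed.

Lemma g_gt0 : 0 < g.
Proof. by have := g_gt1; lra. Qed.

Lemma nm_A : nm A = g.
Proof.
have := congr1 nm AeN; rewrite nmM nm_e mulr1 => ->.
by rewrite /nm /g /= sqrrN expr1n exprMn; congr (Num.sqrt (_ + _)); rewrite [2 ^+ 2]expr2 -natrM.
Qed.

Lemma e_atan : e (atan (2 * s)) = (g^-1) +i* (2 * s * g^-1).
Proof.
by rewrite /e cos_atan sin_atan /g exprMn [2 ^+ 2]expr2 -natrM.
Qed.

Lemma aA : a * A = -1.
Proof.
rewrite /a e_add -!mulrA [e (- th) * A]mulrC AeN e_atan.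
have g0 : g != 0 by rewrite gt_eqF // g_gt0.
have G := g_sqr.
simpc; rewrite /=; congr (_ +i* _); last by field.
transitivity (- ((1 + 4 * s ^+ 2) / g ^+ 2)); first by field.
by rewrite -G divff ?expf_neq0.
Qed.

Lemma nm_a : nm a = g^-1.
Proof. by rewrite /a nmM nmR nm_e mulr1 ger0_norm // invr_ge0 ltW // g_gt0. Qed.

Lemma nm_w : nm w = 1.
Proof. exact: nm_e. Qed.

Lemma nm_xw x : nm (x + w - 1) <= nm (x - w) + 3.
Proof.
have -> : x + w - 1 = (x - w) + (w + w - 1) by ring.
apply: le_trans (nmD _ _) _; rewrite lerD2l.
apply: le_trans (nmD _ _) _; rewrite nmN nm1.
apply: le_trans (lerD (nmD _ _) (lexx _)) _.
by rewrite nm_w; lra.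
Qed.

Lemma small_of_near q n : root (Pn R n) q -> nm (q - w) <= (g - 1) / 8 ->
  nm (q - w) <= 1 -> nm q < 1.
Proof.
move=> /rootP; rewrite Pn_eval => H1 H2 H3.
rewrite ltNge; apply/negP => Hq.
have E : (q ^+ 2 - q - 1) * q ^+ n = -1 by apply/eqP; rewrite -subr_eq0 opprK H1.
have := congr1 nm E; rewrite nmM nmN nm1 nmX => E2.
have Hqn : 1 <= nm q ^+ n by rewrite exprn_ege1.
have E3 : q ^+ 2 - q - 1 = A + (q - w) * (q + w - 1) by rewrite /A; ring.
have := nm_sub A (- ((q - w) * (q + w - 1))).
rewrite opprK -E3 nmN nmM nm_A => H4.
have H5 := nm_xw q.
have H6 : nm (q - w) * nm (q + w - 1) <= (g - 1) / 8 * 4.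
  apply: ler_pM => //; try exact: nm_ge0; lra.
have := g_gt1; have := nm_ge0 (q ^+ 2 - q - 1); have := nm_ge0 q.
nra.
Qed.

Let L := ln g.
Definition rho (n : nat) := expR (- (L / n%:R)).
Definition Xc (n : nat) := (n%:R + 1) * th - atan (2 * s).
Definition kc (n : nat) := (Num.truncn ((Xc n + pi) / (pi *+ 2))).+1.
Definition phi (n : nat) := (atan (2 * s) - th + (pi *+ 2) *+ kc n) / n%:R.
Definition zc (n : nat) := (rho n)%:C * e (phi n).

Lemma L_ge0 : 0 <= L.
Proof. by rewrite /L ln_ge0 // ltW // g_gt1. Qed.

Lemma rho_pow n : (0 < n)%N -> rho n ^+ n = g^-1.
Proof.
move=> n0; rewrite /rho -expRM_natl.
have -> : n%:R * - (L / n%:R) = - L by field; rewrite pnatr_eq0 -lt0n.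
by rewrite expRN /L lnK // posrE g_gt0.
Qed.

Lemma rho_le1 n : rho n <= 1.
Proof. by rewrite /rho expR_le1 oppr_le0 divr_ge0 ?L_ge0. Qed.

Lemma rho_gt0 n : 0 < rho n.
Proof. exact: expR_gt0. Qed.

Lemma rho_low n : 1 - rho n <= L / n%:R.
Proof. by have := expR_ge1Dx (- (L / n%:R)); rewrite -/(rho n); lra. Qed.

Lemma z_pow n : (0 < n)%N -> zc n ^+ n = a.
Proof.
move=> n0; rewrite /zc exprMn -rmorphXn /= rho_pow // e_nat.
have -> : n%:R * phi n = atan (2 * s) - th + (pi *+ 2) *+ kc n.
  by rewrite /phi; field; rewrite pnatr_eq0 -lt0n.
by rewrite e_per.
Qed.

Lemma nm_z n : nm (zc n) = rho n.
Proof. by rewrite /zc nmM nmR nm_e mulr1 ger0_norm // ltW // rho_gt0. Qed.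

Lemma phi_th n : (0 < n)%N -> 0 <= phi n - th <= pi * 3 / n%:R.
Proof.
move=> n0.
have nR : 0 < n%:R :> R by rewrite ltr0n.
have E : phi n - th = ((pi *+ 2) *+ kc n - Xc n) / n%:R.
  by rewrite /phi /Xc; field; rewrite pnatr_eq0 -lt0n.
rewrite E.
have at1 := atan_ltpi2 (2 * s).
have pi0 := pi_gt0 R.
have X0 : 0 <= (Xc n + pi) / (pi *+ 2).
  apply: divr_ge0; last by rewrite mulrn_wge0 // ltW.
  rewrite /Xc; have : 0 <= (n%:R + 1) * th by rewrite mulr_ge0 // ?addr_ge0 // ltW.
  lra.
have /andP[T1 T2] := truncn_itv X0.
have pi2 : 0 < pi *+ 2 :> R by rewrite mulrn_wgt0.
rewrite ler_pdivlMr // in T1; rewrite ltr_pdivrMr // in T2.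
have K : ((pi : R) *+ 2) *+ kc n = ((Num.truncn ((Xc n + pi) / (pi *+ 2)))%:R + 1) * (pi *+ 2).
  by rewrite /kc -[X in X = _]mulr_natl -addn1 natrD.
rewrite K.
set t := (Num.truncn _)%:R in T1 T2 K *.
apply/andP; split.
  apply: divr_ge0; last exact: ltW.
  rewrite mulrDl mul1r; lra.
rewrite ler_pM2r ?invr_gt0 //.
rewrite mulrDl mul1r; rewrite -mulr_natr in T1 T2 *; lra.
Qed.

Lemma nm_zw n : (0 < n)%N -> nm (zc n - w) <= (L + 6 * pi) / n%:R.
Proof.
move=> n0.
have Ee : e th * e (phi n - th) = e (phi n) by rewrite -e_add addrC subrK.
have Ez : zc n - w = ((rho n - 1)%:C * e (phi n)) + w * (e (phi n - th) - 1).
  by rewrite /zc /w mulrBr Ee mulr1 rmorphB /= mulrBl mul1r; ring.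
rewrite Ez; apply: le_trans (nmD _ _) _.
rewrite !nmM nmR nm_e nm_w mulr1 mul1r.
have /andP[P1 P2] := phi_th n n0.
have := e_sub1 (phi n - th) P1.
have := rho_low n; have := rho_le1 n.
rewrite ler0_norm ?subr_le0 ?rho_le1 //.
have -> : (L + 6 * pi) / n%:R = L / n%:R + 2 * (pi * 3 / n%:R) by field; rewrite pnatr_eq0 -lt0n.
lra.
Qed.

Lemma newton_step n z : (4 <= n)%N -> z ^+ n = a -> nm z <= 1 ->
  3 * nm (z - w) <= g - 1 ->
  exists q, root (Pn R n) q /\ nm (z - q) <= 18 * nm (z - w).
Proof.
move=> n4 zn z1 dg.
set d := nm (z - w) in dg *.
have pz : (Pn R n).[z] = a * ((z - w) * (z + w - 1)).
  rewrite Pn_eval zn.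
  have -> : (z ^+ 2 - z - 1) * a + 1 = (z ^+ 2 - z - 1) * a - a * A by rewrite aA opprK.
  by rewrite /A; ring.
have zw3 : nm (z + w - 1) <= 3.
  apply: le_trans (nmD _ _) _; rewrite nmN nm1.
  apply: le_trans (lerD (nmD _ _) (lexx _)) _; rewrite nm_w; lra.
have npz : nm (Pn R n).[z] <= g^-1 * (d * 3).
  rewrite pz nmM nm_a nmM; apply: ler_wpM2l; first by rewrite invr_ge0 ltW // g_gt0.
  by apply: ler_wpM2l => //; exact: nm_ge0.
have dz : z * (Pn R n)^`().[z] = a * ((2 * z - 1) * z + n%:R * (z ^+ 2 - z - 1)).
  rewrite Pn_deriv_eval.
  case: n n4 zn {npz pz} => [//|n'] _ zn /=.
  rewrite -zn exprS -mulr_natr; ring.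
have E3 : z ^+ 2 - z - 1 = A + (z - w) * (z + w - 1) by rewrite /A; ring.
have Q1 : g - d * 3 <= nm (z ^+ 2 - z - 1).
  have := nm_sub A (- ((z - w) * (z + w - 1))).
  rewrite opprK -E3 nmN nmM nm_A => H.
  apply: le_trans H; rewrite lerD2l lerN2; apply: ler_wpM2l => //; exact: nm_ge0.
have Q2 : nm ((2 * z - 1) * z) <= 3.
  rewrite nmM; have : nm (2 * z - 1) <= 3.
    have -> : 2 * z - 1 = z + z - 1 by ring.
    apply: le_trans (nmD _ _) _; rewrite nmN nm1.
    apply: le_trans (lerD (nmD _ _) (lexx _)) _; lra.
  move=> H; have := nm_ge0 z; have := nm_ge0 (2 * z - 1); nra.
have Q3 : nm (n%:R * (z ^+ 2 - z - 1)) = n%:R * nm (z ^+ 2 - z - 1).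
  by rewrite nmM -(rmorph_nat (real_complex R)) nmR normr_nat.
have nR : 4 <= n%:R :> R by rewrite (ler_nat R 4 n).
have Q4 : n%:R - 3 <= nm ((2 * z - 1) * z + n%:R * (z ^+ 2 - z - 1)).
  have := nm_sub (n%:R * (z ^+ 2 - z - 1)) (- ((2 * z - 1) * z)).
  rewrite opprK nmN Q3 [(2 * z - 1) * z + _]addrC => H; apply: le_trans H.
  have : 1 <= nm (z ^+ 2 - z - 1) by lra.
  move=> HY; have : n%:R * 1 <= n%:R * nm (z ^+ 2 - z - 1) by apply: ler_wpM2l => //; lra.
  lra.
have G0 : 0 < g^-1 by rewrite invr_gt0 g_gt0.
have Q5 : g^-1 * (n%:R - 3) <= nm (Pn R n)^`().[z].
  have : nm (z * (Pn R n)^`().[z]) <= nm (Pn R n)^`().[z].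
    rewrite nmM; have := nm_ge0 (Pn R n)^`().[z]; have := nm_ge0 z; nra.
  apply: le_trans; rewrite dz nmM nm_a ler_pM2l //.
have d0 : (Pn R n)^`().[z] != 0.
  rewrite -nm_eq0 gt_eqF //; apply: lt_le_trans Q5; rewrite mulr_gt0 //; lra.
have [q rq Hq] := newton (Pn R n) z d0.
exists q; split => //.
have sz := size_Pn n.
have sR : ((size (Pn R n)).-1)%:R <= n%:R + 2 :> R.
  have E2 : (n%:R + 2 : R) = (n + 2)%:R by rewrite natrD.
  by rewrite E2 ler_nat.
have D0 := nm_ge0 (z - q); have P0 := nm_ge0 (Pn R n).[z]; have dd0 : 0 <= d by exact: nm_ge0.
have S0 : 0 <= ((size (Pn R n)).-1)%:R :> R by exact: ler0n.
have H1 := le_trans (ler_wpM2l D0 Q5) Hq.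
have H2 := ler_pM S0 P0 sR npz.
have H3 : g^-1 * (nm (z - q) * (n%:R - 3)) <= g^-1 * ((n%:R + 2) * (d * 3)).
  have := le_trans H1 H2.
  by rewrite mulrCA [X in _ <= X]mulrCA.
rewrite ler_pM2l // in H3.
have H4 : (n%:R + 2) * (d * 3) <= (n%:R - 3) * (18 * d) by nra.
have H5 := le_trans H3 H4.
rewrite [X in X <= _]mulrC ler_pM2l in H5 => //.
lra.
Qed.

Lemma root_near dl : 0 < dl -> exists N, forall n, (N < n)%N ->
  exists q, small_roots n q /\ nm (q - w) < dl.
Proof.
move=> dl0.
have g1 := g_gt1.
set d0 := Num.min 1 ((g - 1) / 8).
set m := Num.min dl d0.
have mpos : 0 < m by rewrite !lt_min dl0 ltr01 /=; lra.
have md : m <= dl by rewrite ge_min lexx.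
have md0 : m <= 1 by rewrite !ge_min lexx orbT.
have md1 : m <= (g - 1) / 8 by rewrite !ge_min lexx !orbT.
set C := 19 * (L + 6 * pi).
have C0 : 0 <= C by rewrite /C; have := L_ge0; have := pi_gt0 R; lra.
exists (maxn 4 (Num.truncn (C / m))) => n.
rewrite gtn_max => /andP[n4 nT].
have n0 : (0 < n)%N by apply: leq_trans n4.
have nR : 0 < n%:R :> R by rewrite ltr0n.
have Cm : C / m < n%:R.
  have /andP[_ T2] := truncn_itv (divr_ge0 C0 (ltW mpos)).
  apply: lt_le_trans T2 _; rewrite ler_nat; exact: nT.
have Cn : C / n%:R < m.
  by rewrite ltr_pdivrMr // mulrC -ltr_pdivrMr.
have Hz := nm_zw n n0.
have E19 : 19 * ((L + 6 * pi) / n%:R) = C / n%:R by rewrite /C mulrA.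
have dsmall : 19 * nm (zc n - w) < m.
  apply: le_lt_trans Cn; rewrite -E19; apply: ler_wpM2l => //.
have dz0 := nm_ge0 (zc n - w).
have [q [rq Hq]] := newton_step n (zc n) (ltnW n4) (z_pow n n0) (ltac:(rewrite nm_z; exact: rho_le1)) (ltac:(lra)).
have qw : nm (q - w) <= 19 * nm (zc n - w).
  have -> : q - w = (zc n - w) - (zc n - q) by ring.
  apply: le_trans (nmD _ _) _; rewrite nmN; lra.
exists q; split; last by lra.
split => //.
rewrite nm_norm -[1]/(1%:C) ltcR.
apply: small_of_near rq _ _; lra.
Qed.

End Core.

Lemma small_conj n (q : R[i]) : small_roots n q -> small_roots n (q^*).
Proof. by case=> r h; split; [exact: root_conj | rewrite normcJ]. Qed.

Lemma hull4 n (q1 q2 z : R[i]) : small_roots n q1 -> small_roots n q2 ->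
  complex.Re q2 < complex.Re q1 ->
  complex.Re q2 <= complex.Re z <= complex.Re q1 ->
  0 < complex.Im q1 -> 0 < complex.Im q2 ->
  `|complex.Im z| <= complex.Im q1 -> `|complex.Im z| <= complex.Im q2 -> Cn n z.
Proof.
move=> S1 S2 + /andP[]; move: S1 S2.
case: q1 => u1 v1; case: q2 => u2 v2; case: z => x y /= S1 S2 u12 ux xu v10 v20 y1 y2.
set lam := (x - u2) / (u1 - u2).
have l0 : 0 <= lam by rewrite divr_ge0 // subr_ge0 // ltW.
have l1 : lam <= 1 by rewrite ler_pdivrMr ?subr_gt0 // mul1r lerD2r.
set h := lam * v1 + (1 - lam) * v2.
have hy : `|y| <= h.
  have -> : `|y| = lam * `|y| + (1 - lam) * `|y| by ring.
  by apply: lerD; apply: ler_wpM2l => //; lra.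
have h0 : 0 < h.
  have : 0 < lam * v1 + (1 - lam) * v2.
    case: (eqVneq lam 0) => [->|ln0]; first by rewrite mul0r add0r subr0 mul1r.
    have : 0 < lam * v1 by rewrite mulr_gt0 // lt_def ln0 l0.
    have : 0 <= (1 - lam) * v2 by rewrite mulr_ge0 // ?subr_ge0 // ltW.
    lra.
  by [].
set sg := y / h.
have s1 : `|sg| <= 1 by rewrite /sg normrM normfV (gtr0_norm h0) ler_pdivrMr // mul1r.
have s1' := s1; rewrite ler_norml in s1'; case/andP: s1' => sa sb.
pose W := [:: lam * (1 + sg) / 2; lam * (1 - sg) / 2;
              (1 - lam) * (1 + sg) / 2; (1 - lam) * (1 - sg) / 2].
pose Q := [:: u1 +i* v1; (u1 +i* v1)^*; u2 +i* v2; (u2 +i* v2)^*].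
exists 4%N, (fun i : 'I_4 => nth 0 Q i), (fun i : 'I_4 => nth 0 W i).
split; [|split; [|split]].
- case=> [[|[|[|[|i]]]] Hi] //=.
  + exact: (small_conj n _ S1).
  + exact: (small_conj n _ S2).
- case=> [[|[|[|[|i]]]] Hi] //=; apply: divr_ge0 => //; apply: mulr_ge0; lra.
- by rewrite !big_ord_recl big_ord0 /=; field.
- rewrite !big_ord_recl big_ord0 /=.
  have hn0 : h != 0 by rewrite gt_eqF.
  have un0 : u1 - u2 != 0 by rewrite subr_eq0 gt_eqF.
  simpc; rewrite /=; congr (_ +i* _).
    by rewrite /lam; field.
  transitivity (sg * h); last by rewrite /h; field.
  by rewrite /sg divfK.
Qed.

Lemma hull_le1 n (z : R[i]) : Cn n z -> nm z <= 1.
Proof.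
case=> k [q [wt [Sq [W0 [W1 ->]]]]].
apply: le_trans (nm_sum _ _ _) _.
rewrite -W1; apply: ler_sum => i _; rewrite nmM nmR ger0_norm //.
have : nm (q i) <= 1.
  by case: (Sq i) => _; rewrite nm_norm -[1]/(1%:C) ltcR => /ltW.
by move=> H; rewrite -[X in _ <= X]mulr1; apply: ler_wpM2l.
Qed.

Lemma ReB (a b : R[i]) : complex.Re (a - b) = complex.Re a - complex.Re b.
Proof. by case: a; case: b. Qed.

Lemma ImB (a b : R[i]) : complex.Im (a - b) = complex.Im a - complex.Im b.
Proof. by case: a; case: b. Qed.

Lemma disc_ivt (u : nat -> R) (x : R) K : (0 < K)%N -> x <= u 0%N -> u K <= x ->
  exists k, (k < K)%N /\ u k.+1 <= x <= u k.
Proof.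
elim: K => [//|K IH] _ x0 xK.
case: (posnP K) => [K0|Kpos].
  by exists 0%N; rewrite x0 andbT; split => //; move: xK; rewrite K0.
case: (boolP (u K <= x)) => H.
  by have [k [kK Hk]] := IH Kpos x0 H; exists k; split => //; apply: ltnW.
exists K; split => //; rewrite xK /=; rewrite -ltNge in H; exact: ltW.
Qed.

Lemma choose_roots (P : nat -> nat -> R[i] -> Prop) K :
  (forall j, (j <= K)%N -> exists N, forall n, (N < n)%N -> exists q, P n j q) ->
  exists N, forall n, (N < n)%N -> exists f : nat -> R[i], forall j, (j <= K)%N -> P n j (f j).
Proof.
elim: K => [|K IH] H.
  have [N HN] := H 0%N (leqnn 0).
  exists N => n Nn; have [q Hq] := HN n Nn; exists (fun _ => q) => j.
  by rewrite leqn0 => /eqP ->.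
have [N1 H1] := IH (fun j jK => H j (leqW jK)).
have [N2 H2] := H K.+1 (leqnn _).
exists (maxn N1 N2) => n; rewrite gtn_max => /andP[n1 n2].
have [f Hf] := H1 n n1; have [q Hq] := H2 n n2.
exists (fun j => if j == K.+1 then q else f j) => j jK.
case: eqP => [->//|/eqP jn]; apply: Hf.
by rewrite -ltnS ltn_neqAle jn jK.
Qed.

Lemma sq_le_abs (y v : R) : 0 <= v -> y ^+ 2 <= v ^+ 2 -> `|y| <= v.
Proof.
move=> v0 H; rewrite -(ler_pXn2r (n := 2)) ?nnegrE ?normr_ge0 //.
by rewrite real_normK ?num_real.
Qed.

Lemma lower (eps : R) : 0 < eps -> eps <= 1 / 2 ->
  exists N, forall n, (N < n)%N -> forall z : R[i], nm z <= 1 - eps -> Cn n z.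
Proof.
move=> e0 e1.
set c0 := 1 - eps / 4.
set K := (Num.truncn (16 / eps)).+1.
have K0 : (0 < K)%N by [].
have KR : 16 / eps < K%:R.
  by have /andP[_ T] := truncn_itv (divr_ge0 (ler0n R 16) (ltW e0)).
have KR0 : 0 < K%:R :> R by rewrite ltr0n.
have KR' : 16 < K%:R * eps by rewrite -ltr_pdivrMr.
set eta := 2 * c0 / K%:R.
have eta0 : 0 < eta by rewrite /eta divr_gt0 // /c0; lra.
have etae : eta <= eps / 8.
  rewrite /eta ler_pdivrMr // /c0.
  have : 0 <= K%:R * eps by rewrite mulr_ge0 // ltW.
  lra.
pose c := fun j : nat => c0 - j%:R * eta.
have cK : c K = - c0 by rewrite /c /eta; field; rewrite gt_eqF.
have c0_lt1 : c0 < 1 by rewrite /c0; lra.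
have c0_gt0 : 0 < c0 by rewrite /c0; lra.
have crange : forall j, (j <= K)%N -> - c0 <= c j <= c0.
  move=> j jK; apply/andP; split; last by rewrite /c; have := ler0n R j; have := ltW eta0; nra.
  rewrite -cK /c lerD2l lerN2; apply: ler_wpM2r; [exact: ltW | by rewrite ler_nat].
have cS : forall j, c j.+1 = c j - eta.
  by move=> j; rewrite /c -addn1 natrD; ring.
set sig := Num.sqrt (1 - c0 ^+ 2).
have sig0 : 0 < sig by rewrite /sig sqrtr_gt0; nra.
set dl := Num.min (eps / 32) (Num.min (eta / 4) (sig / 2)).
have dl0 : 0 < dl.
  by rewrite /dl !lt_min; apply/and3P; split; apply: divr_gt0.
have dle : dl <= eps / 32 by rewrite /dl ge_min lexx.
have dlt : dl <= eta / 4 by rewrite /dl !ge_min lexx !orbT.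
have dls : dl <= sig / 2 by rewrite /dl !ge_min lexx !orbT.
pose th := fun j => acos (c j).
have thr : forall j, (j <= K)%N -> 0 < th j < pi.
  move=> j jK; have := crange j jK => /andP[h1 h2].
  by rewrite /th acos_gt0 ?acos_ltpi //; apply/andP; split; lra.
have cos_th : forall j, (j <= K)%N -> cos (th j) = c j.
  move=> j jK; have := crange j jK => /andP[h1 h2].
  by rewrite /th acosK // in_itv /=; apply/andP; split; lra.
have sin_th : forall j, (j <= K)%N -> sig <= sin (th j).
  move=> j jK; have := crange j jK => /andP[h1 h2].
  rewrite /th sin_acos; last by apply/andP; split; lra.
  rewrite /sig ler_sqrt; last by nra.
  nra.
have [N HN] := @choose_roots
   (fun n j q => small_roots n q /\ nm (q - e (th j)) < dl) K
   (fun j jK => let: conj h1 h2 := andP (thr j jK) in root_near (th j) h1 h2 dl dl0).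
exists N => n Nn z Hz.
have [f Hf] := HN n Nn.
pose u := fun j => complex.Re (f j).
pose v := fun j => complex.Im (f j).
have F1 : forall j, (j <= K)%N -> `|u j - c j| < dl.
  move=> j jK; have [_ H] := Hf j jK.
  by apply: le_lt_trans H; rewrite -(cos_th j jK); have := Re_le (f j - e (th j)); rewrite ReB.
have F2 : forall j, (j <= K)%N -> 0 < v j.
  move=> j jK; have [_ H] := Hf j jK.
  have := Im_le (f j - e (th j)); rewrite ImB /= -/(v j) => H2.
  have := sin_th j jK; rewrite ler_norml in H2.
  move: H2 => /andP[H3 H4]; lra.
have F3 : forall j, (j <= K)%N -> 1 - dl <= nm (f j) < 1.
  move=> j jK; have [[_ H1] H] := Hf j jK; apply/andP; split.
    have := nm_sub (e (th j)) (e (th j) - f j); rewrite nm_e nmB.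
    have -> : e (th j) - (e (th j) - f j) = f j by ring.
    lra.
  by move: H1; rewrite nm_norm -[1]/(1%:C) ltcR.
set x := complex.Re z.
set y := complex.Im z.
have Hx : `|x| <= 1 - eps by apply: le_trans (Re_le z) Hz.
have Hxy : x ^+ 2 + y ^+ 2 <= (1 - eps) ^+ 2.
  rewrite -nm_sqr ler_pXn2r ?nnegrE ?nm_ge0 //; lra.
move: Hx; rewrite ler_norml => /andP[Hx1 Hx2].
have c0E : c0 = 1 - eps / 4 by [].
have c00 : c 0%N = c0 by rewrite /c mul0r subr0.
have u0 : x <= u 0%N.
  have := F1 0%N isT; rewrite c00 ltr_norml => /andP[h _]; lra.
have uK : u K <= x.
  have := F1 K (leqnn K); rewrite cK ltr_norml => /andP[_ h]; lra.
have [k [kK /andP[uk1 uk2]]] := disc_ivt u x K K0 u0 uK.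
have kK' : (k <= K)%N := ltnW kK.
have sp1 : u k - u k.+1 < eta + 2 * dl.
  have := F1 k kK'; have := F1 k.+1 kK; rewrite cS !ltr_norml.
  move=> /andP[a1 a2] /andP[a3 a4]; lra.
have sp2 : u k.+1 < u k.
  have := F1 k kK'; have := F1 k.+1 kK; rewrite cS !ltr_norml.
  move=> /andP[a1 a2] /andP[a3 a4]; lra.
have Hy : forall j, (j <= K)%N -> `|u j - x| <= eta + 2 * dl -> `|y| <= v j.
  move=> j jK Hj; apply: sq_le_abs; first exact: ltW (F2 j jK).
  have := F3 j jK => /andP[n1 n2].
  have E : v j ^+ 2 = nm (f j) ^+ 2 - u j ^+ 2 by rewrite nm_sqr /u /v; ring.
  have hu : `|u j| <= 1 by apply: le_trans (Re_le (f j)) _; exact: ltW.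
  have hx : `|x| <= 1 by rewrite ler_norml; apply/andP; split; lra.
  have A1 : u j ^+ 2 - x ^+ 2 <= (eta + 2 * dl) * 2.
    have -> : u j ^+ 2 - x ^+ 2 = (u j - x) * (u j + x) by ring.
    apply: le_trans (ler_norm _) _; rewrite normrM.
    apply: ler_pM => //; try exact: normr_ge0.
    apply: le_trans (ler_normD _ _) _; lra.
  have A2 : (eta + 2 * dl) * 2 <= (1 - dl) ^+ 2 - (1 - eps) ^+ 2.
    have P1 : (eps - dl) * 1 <= (eps - dl) * (2 - eps - dl) by apply: ler_wpM2l; lra.
    have -> : (1 - dl) ^+ 2 - (1 - eps) ^+ 2 = (eps - dl) * (2 - eps - dl) by ring.
    lra.
  have A3 : (1 - dl) ^+ 2 <= nm (f j) ^+ 2.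
    by rewrite !expr2; apply: ler_pM; lra.
  rewrite E; lra.
have [S1 _] := Hf k kK'.
have [S2 _] := Hf k.+1 kK.
apply: (hull4 n (f k) (f k.+1) z S1 S2) => //.
- by rewrite uk1 uk2.
- exact: F2.
- exact: F2.
- apply: Hy => //; rewrite ger0_norm; lra.
- apply: Hy => //; rewrite ler0_norm; lra.
Qed.

End NM.

Theorem theorem4p3 (R : realType) (eps : R) :
  0 < eps ->
  exists N : nat, forall n : nat, (N < n)%N ->
    (forall z : R[i], cdisk (1 - eps) z -> Cn n z) /\
    (forall z : R[i], Cn n z -> cdisk 1 z).
Proof.
move=> e0.
set e' := Num.min eps (1 / 2).
have e'0 : 0 < e' by rewrite /e' lt_min e0 /=; lra.
have e'1 : e' <= 1 / 2 by rewrite /e' ge_min lexx orbT.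
have e'e : e' <= eps by rewrite /e' ge_min lexx.
have [N HN] := @lower R e' e'0 e'1.
exists N => n Nn; split.
- move=> z; rewrite /cdisk nm_norm lecR => Hz; apply: HN => //; lra.
- by move=> z /hull_le1; rewrite /cdisk nm_norm lecR.
Qed.
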